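(* Let $G\le\mathrm{Aut}(\mathcal{T}_d)$ be any self-similar group. Then every non-trivial element of the Röver–Nekrashevych group $V_d(G)$ has infinitely many $[F_d,F_d]$-conjugates; equivalently, the inclusion $L([F_d,F_d])\subseteq L(V_d(G))$ is irreducible.
   Context: Fix $d\ge2$. $\mathcal{T}_d$ is the infinite rooted $d$-regular tree with vertex set $\{1,\dots,d\}^*$ (finite words, root the empty word), $w$ adjacent to $wi$. Every automorphism permutes the level-1 vertices, giving $\rho:\mathrm{Aut}(\mathcal{T}_d)\to S_d$. Let $\mathcal{T}_d(i)$ be the subtree spanned by words $iw$ and $\delta_i:\mathcal{T}_d\to\mathcal{T}_d(i)$, $w\mapsto iw$. For $g\in\mathrm{Aut}(\mathcal{T}_d)$ put $\phi_i(g)=\delta^{-1}_{\rho(g)i}\circ g|_{\mathcal{T}_d(i)}\circ\delta_i$. $G\le\mathrm{Aut}(\mathcal{T}_d)$ is self-similar if $\phi_i(G)\subseteq G$ for all $i$. Let $C_d=\{1,\dots,d\}^{\mathbb{N}}$ (the boundary of $\mathcal{T}_d$, on which $\mathrm{Aut}(\mathcal{T}_d)$ acts), and for $w\in\{1,\dots,d\}^*$ let $C_d(w)=\{w\kappa:\kappa\in C_d\}$ with homeomorphism $h_w:C_d\to C_d(w)$, $\kappa\mapsto w\kappa$. $V_d(G)$ is the group of homeomorphisms of $C_d$ obtained by choosing two partitions of $C_d$ into the same number $n$ of cones $C_d(w_1^+),\dots,C_d(w_n^+)$ and $C_d(w_1^-),\dots,C_d(w_n^-)$, a bijection $i\mapsto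 j(i)$, and $g_1,\dots,g_n\in G$, and mapping $C_d(w_i^+)$ to $C_d(w_{j(i)}^-)$ via $h_{w_{j(i)}^-}\circ g_i\circ h_{w_i^+}^{-1}$. $F_d\le V_d(G)$ is the subgroup of such homeomorphisms with all $g_i=1$ that preserve the lexicographic order of $C_d$ (the Higman–Thompson group $F_d$), and $[F_d,F_d]$ its commutator subgroup. An inclusion $N\subseteq M$ of von Neumann algebras is irreducible if $N'\cap M\subseteq N$. $L(G)$ is the group von Neumann algebra. *)

(* Defs.v *)
(* alphabet {1..d} is rendered as 'I_d. *)
From mathcomp Require Import all_boot.
From Stdlib Require List.

Set Implicit Arguments.
Unset Strict Implicit.
Unset Printing Implicit Defensive.

(* Vertices of T_d: finite words; w is adjacent to (rcons w i). *)
Definition word (d : nat) := seq 'I_d.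
Definition bnd (d : nat) := nat -> 'I_d.
Definition tmap (d : nat) := word d -> word d.

(* Automorphisms of the rooted tree T_d: bijections fixing the root and
   mapping children of w to children of g w (hence preserving adjacency). *)
Definition tree_aut d (g : tmap d) : Prop :=
  bijective g /\ g [::] = [::] /\
  (forall w (i : 'I_d), exists j : 'I_d, g (rcons w i) = rcons (g w) j).

(* phi_i(g) = delta^{-1}_{rho(g) i} o g|_{T_d(i)} o delta_i *)
Definition sect d (i : 'I_d) (g : tmap d) : tmap d :=
  fun w => behead (g (i :: w)).

Definition is_aut_subgroup d (G : tmap d -> Prop) : Prop :=
  (forall g, G g -> tree_aut g) /\
  G id /\
  (forall g h, G g -> G h -> G (g \o h)) /\
  (forall g, G g -> exists h, G h /\ cancel g h /\ cancel h g).

Definition self_similar d (G : tmap d -> Prop) : Prop :=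
  is_aut_subgroup G /\ forall g (i : 'I_d), G g -> G (sect i g).

Definition bact d (g : tmap d) (k : bnd d) : bnd d :=
  fun n => nth (k n) (g (mkseq k n.+1)) n.

Definition wcat d (w : word d) (k : bnd d) : bnd d :=
  fun n => if n < size w then nth (k n) w n else k (n - size w).

Definition in_cone d (w : word d) (k : bnd d) : Prop :=
  forall n, n < size w -> k n = nth (k n) w n.

Definition cone_partition d n (ws : 'I_n -> word d) : Prop :=
  forall k : bnd d, exists! i : 'I_n, in_cone (ws i) k.

Definition in_V d (G : tmap d -> Prop) (f : bnd d -> bnd d) : Prop :=
  exists (n : nat) (wp wm : 'I_n -> word d) (j : 'I_n -> 'I_n)
         (gs : 'I_n -> tmap d),
    [/\ cone_partition wp, cone_partition wm, bijective j,
        (forall i, G (gs i)) &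
        (forall i k, f (wcat (wp i) k) = wcat (wm (j i)) (bact (gs i) k))].

Definition lex_lt d (k k' : bnd d) : Prop :=
  exists n, (forall m, m < n -> k m = k' m) /\ k n < k' n.

Definition in_F d (f : bnd d -> bnd d) : Prop :=
  (exists (n : nat) (wp wm : 'I_n -> word d) (j : 'I_n -> 'I_n),
    [/\ cone_partition wp, cone_partition wm, bijective j &
        (forall i k, f (wcat (wp i) k) = wcat (wm (j i)) k)]) /\
  (forall k k', lex_lt k k' -> lex_lt (f k) (f k')).

Definition F_commutator d (c : bnd d -> bnd d) : Prop :=
  exists a b a' b' : bnd d -> bnd d,
    [/\ in_F a, in_F b, cancel a a' /\ cancel a' a, cancel b b' /\ cancel b' b &
        c = a' \o b' \o a \o b].

(* [F_d, F_d]: the subgroup generated by commutators (products of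
   commutators, which is closed under inverses as [a,b]^{-1} = [b,a]). *)
Inductive in_FF d : (bnd d -> bnd d) -> Prop :=
| FF_id : in_FF (@id (bnd d))
| FF_mul c f : F_commutator c -> in_FF f -> in_FF (c \o f).

(* Main.v *)
Require Import Defs.
From mathcomp Require Import all_boot.
From Stdlib Require List.
From Stdlib Require Import FunctionalExtensionality Classical ClassicalEpsilon.
Set Implicit Arguments.
Unset Strict Implicit.
Unset Printing Implicit Defensive.

Definition shift d (m : nat) (k : bnd d) : bnd d := fun n => k (m + n).
Definition ccons d (c : 'I_d) (k : bnd d) : bnd d :=
  fun n => if n is m.+1 then k m else c.
Fixpoint pre d (w : word d) (k : bnd d) : bool :=
  if w is c :: w' then (k 0 == c) && pre w' (shift 1 k) else true.

Lemma wcat_nil d (k : bnd d) : wcat [::] k = k.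
Proof. apply: functional_extensionality => n; rewrite /wcat /= subn0 //. Qed.

Lemma wcat_cons d c (w : word d) k : wcat (c :: w) k = ccons c (wcat w k).
Proof.
apply: functional_extensionality => -[|n]; rewrite /wcat /ccons //=.
rewrite ltnS subSS; case: ifP => // h; exact: set_nth_default.
Qed.

Lemma wcat_cat d (v s : word d) k : wcat (v ++ s) k = wcat v (wcat s k).
Proof. elim: v => [|c v IH] /=; by rewrite ?wcat_nil ?wcat_cons ?IH. Qed.

Lemma pre_wcat d (w : word d) k : pre w (wcat w k).
Proof.
elim: w k => [//|c w IH] k; rewrite wcat_cons /= eqxx /=.
exact: IH.
Qed.

Lemma shift_wcat d (w : word d) k : shift (size w) (wcat w k) = k.
Proof.
elim: w k => [|c w IH] k; first by rewrite wcat_nil.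
rewrite wcat_cons -{2}(IH k); done.
Qed.

Lemma wcat_shift d (w : word d) k : pre w k -> wcat w (shift (size w) k) = k.
Proof.
elim: w k => [|c w IH] k /=; first by rewrite wcat_nil.
case/andP => /eqP h0 hp; rewrite wcat_cons.
have := IH _ hp => e.
apply: functional_extensionality => -[|n] /=; first by rewrite /ccons h0.
rewrite /ccons e //.
Qed.

Lemma pre_cat d (v s : word d) k :
  pre (v ++ s) k = pre v k && pre s (shift (size v) k).
Proof.
elim: v k => [|c v IH] k /=; first by [].
by rewrite IH andbA.
Qed.

Lemma pre_in_cone d (w : word d) k : pre w k <-> in_cone w k.
Proof.
elim: w k => [|c w IH] k /=; first by split => // _ n.
split.
- case/andP => /eqP h0 /IH hc [|n] /= hn; first by rewrite h0.
  exact: (hc n hn).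
- move=> hc; apply/andP; split.
    by apply/eqP; exact: (hc 0).
  apply/IH => n hn; exact: (hc n.+1 hn).
Qed.

Lemma pre_agree d (w : word d) k k' :
  (forall m, m < size w -> k m = k' m) -> pre w k = pre w k'.
Proof.
elim: w k k' => [//|c w IH] k k' h /=.
rewrite (h 0 isT) (IH _ (shift 1 k')) //.
move=> m hm; exact: (h m.+1).
Qed.

Lemma wcat_lt d (w : word d) s s' m : m < size w -> wcat w s m = wcat w s' m.
Proof. move=> h; rewrite /wcat h; exact: set_nth_default. Qed.

Lemma wcat_agree d (w : word d) k m : pre w k -> m < size w -> wcat w k m = k m.
Proof.
move=> hp hm; rewrite -{2}(wcat_shift hp); exact: wcat_lt.
Qed.

Lemma cnt1 (T : finType) (a : T) (q : pred T) :
  count (fun c => (a == c) && q c) (enum T) = q a.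
Proof.
case qa: (q a).
- transitivity (count (pred1 a) (enum T)).
    apply: eq_count => c /=; rewrite eq_sym; case: eqP => [->|] //=.
  by rewrite count_uniq_mem ?enum_uniq // mem_enum.
- rewrite (eq_count (a2 := pred0)) ?count_pred0 // => c /=.
  by case: eqP => // <-.
Qed.

Fixpoint compl d (w : word d) : seq (word d) :=
  if w is c :: w' then [seq [:: c'] | c' <- enum 'I_d & c' != c] ++
                       [seq c :: v | v <- compl w']
  else [::].

Lemma count_compl d (w : word d) (k : bnd d) :
  count (fun v => pre v k) (compl w) = ~~ pre w k.
Proof.
elim: w k => [//|c w IH] k /=.
rewrite count_cat !count_map count_filter.
rewrite (eq_count (a2 := fun c' => (k 0 == c') && (c' != c))); last first.
  by move=> c' /=; rewrite andbT.
rewrite cnt1.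
rewrite (eq_count (a2 := fun v => (k 0 == c) && pre v (shift 1 k))) //.
case: (k 0 =P c) => [e|ne] /=.
  by rewrite IH.
by rewrite count_pred0 addn0.
Qed.

Lemma mem_compl_pre d (w v : word d) (k : bnd d) : v \in compl w -> pre v k -> ~~ pre w k.
Proof.
move=> hv hp.
have h : 0 < count (fun v => pre v k) (compl w) by rewrite -has_count; apply/hasP; exists v.
by move: h; rewrite count_compl; case: (pre w k).
Qed.

Lemma find_uniq_count (T : eqType) (a : pred T) (L : seq T) x0 i :
  count a L = 1 -> i < size L -> a (nth x0 L i) -> i = find a L.
Proof.
move=> hc hi ha.
have hf : find a L <= i.
  rewrite leqNgt; apply/negP => h; by move: (before_find x0 h); rewrite ha.
case: (ltngtP (find a L) i) hf => // hlt _.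
have hd : 0 < count a (drop i L).
  rewrite (drop_nth x0 hi) /= ha //.
have ht : 0 < count a (take i L).
  rewrite -has_count; apply/hasP; exists (nth x0 L (find a L)).
    rewrite -(nth_take x0 hlt); apply: mem_nth; rewrite size_take.
    by case: ifP => // _; apply: (leq_trans hlt); exact: ltnW.
  apply: nth_find; rewrite has_find; exact: (ltn_trans hlt).
by move: hc; rewrite -(cat_take_drop i L) count_cat; case: (count a (take i L)) ht hd => // [] [|m] //= _; case: (count a (drop i L)).
Qed.

Lemma cp_of_count d (L : seq (word d)) n (wp : 'I_n -> word d) :
  size L = n -> (forall i : 'I_n, wp i = nth [::] L i) ->
  (forall k, count (fun v => pre v k) L = 1) -> cone_partition wp.
Proof.
move=> hs hw hc k.
have hh : has (fun v => pre v k) L by rewrite has_count hc.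
have hlt : find (fun v => pre v k) L < n by rewrite -hs -has_find.
exists (@Ordinal n _ hlt); split.
  rewrite hw /=; apply pre_in_cone; exact: (nth_find [::] hh).
move=> i hi; have hp := proj2 (pre_in_cone _ _) hi; rewrite hw in hp; apply: val_inj => /=.
symmetry; apply: (find_uniq_count (hc k)) hp; by rewrite hs.
Qed.

Definition Acore d (t : bnd d.+2) : bnd d.+2 :=
  if t 0 == ord0 then
    (if t 1 == ord_max then ccons ord_max (ccons ord0 (shift 2 t)) else shift 1 t)
  else ccons ord_max t.
Definition Acore' d (s : bnd d.+2) : bnd d.+2 :=
  if s 0 == ord_max then
    (if s 1 == ord0 then ccons ord0 (ccons ord_max (shift 2 s)) else shift 1 s)
  else ccons ord0 s.

Lemma top_ne0 d : (ord_max : 'I_d.+2) != ord0.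
Proof. by []. Qed.

Lemma AcoreK d : cancel (@Acore d) (@Acore' d).
Proof.
move=> t; apply: functional_extensionality => n.
rewrite /Acore.
case: (t 0 =P ord0) => h0; [case: (t 1 =P ord_max) => h1|].
- rewrite /Acore' /ccons /= eqxx /=.
  case: n => [|[|n]] //=.
- rewrite /Acore' /ccons /shift /=.
  have -> : (t 1 == ord_max) = false by apply/eqP.
  case: n => [|n] //=.
- rewrite /Acore' /ccons /shift /= eqxx /=.
  have -> : (t 0 == ord0) = false by apply/eqP.
  done.
Qed.

Lemma Acore'K d : cancel (@Acore' d) (@Acore d).
Proof.
move=> t; apply: functional_extensionality => n.
rewrite /Acore'.
case: (t 0 =P ord_max) => h0; [case: (t 1 =P ord0) => h1|].
- rewrite /Acore /ccons /= eqxx /=.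
  case: n => [|[|n]] //=.
- rewrite /Acore /ccons /shift /=.
  have -> : (t 1 == ord0) = false by apply/eqP.
  case: n => [|n] //=.
- rewrite /Acore /ccons /=.
  have -> : (t 0 == ord_max) = false by apply/eqP.
  done.
Qed.

Lemma lex_head d (k k' : bnd d) : k 0 < k' 0 -> lex_lt k k'.
Proof. by exists 0. Qed.

Lemma lex_cons d (c : 'I_d) a b : lex_lt a b -> lex_lt (ccons c a) (ccons c b).
Proof.
case=> n [h1 h2]; exists n.+1; split => // -[|m] //= hm; exact: h1.
Qed.

Lemma lex_le0 d (k k' : bnd d) : lex_lt k k' -> k 0 <= k' 0.
Proof.
case=> -[|n] [h1 h2]; first exact: ltnW.
by rewrite (h1 0).
Qed.

Lemma lex_shift d (k k' : bnd d) m :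
  lex_lt k k' -> (forall i, i < m -> k i = k' i) -> lex_lt (shift m k) (shift m k').
Proof.
case=> n [h1 h2] he.
case: (ltnP n m) => hnm.
  by move: h2; rewrite (he n hnm) ltnn.
exists (n - m); split.
  move=> i hi; rewrite /shift; apply: h1; by rewrite -ltn_subRL.
by rewrite /shift subnKC.
Qed.

Lemma lex_tail d (k k' : bnd d) :
  lex_lt k k' -> k 0 = k' 0 -> lex_lt (shift 1 k) (shift 1 k').
Proof. move=> h e; apply: lex_shift h _ => -[|i] //. Qed.

Lemma lex_wcat d (w : word d) s s' : lex_lt s s' -> lex_lt (wcat w s) (wcat w s').
Proof.
elim: w => [|c w IH] h; first by rewrite !wcat_nil.
rewrite !wcat_cons; apply: lex_cons; exact: IH.
Qed.

Lemma ltmax d (c : 'I_d.+2) : c <> ord_max -> c < (ord_max : 'I_d.+2).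
Proof.
move=> h; rewrite ltn_neqAle -ltnS ltn_ord andbT; apply/eqP => e; apply: h.
exact: val_inj.
Qed.

Lemma pos0 d (c : 'I_d.+2) : c <> ord0 -> (ord0 : 'I_d.+2) < c.
Proof.
move=> h; rewrite lt0n; apply/eqP => e; apply: h; exact: val_inj.
Qed.

Lemma Acore_lex d (t t' : bnd d.+2) : lex_lt t t' -> lex_lt (Acore t) (Acore t').
Proof.
move=> hl; rewrite /Acore.
case: (t 0 =P ord0) => a0; case: (t' 0 =P ord0) => b0.
- have hl1 := lex_tail hl (etrans a0 (esym b0)).
  case: (t 1 =P ord_max) => a1; case: (t' 1 =P ord_max) => b1.
  + apply: lex_cons; apply: lex_cons; exact: (lex_tail hl1 (etrans a1 (esym b1))).
  + exfalso; have := lex_le0 hl1; rewrite /shift /= a1 => hle.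
    apply: b1; apply: val_inj => /=; apply/eqP; rewrite eqn_leq hle.
    by rewrite -ltnS ltn_ord.
  + apply: lex_head; rewrite /shift /=; exact: ltmax.
  + exact: hl1.
- case: (t 1 =P ord_max) => a1.
  + apply: lex_cons; apply: lex_head => /=; exact: pos0.
  + apply: lex_head; rewrite /shift /=; exact: ltmax.
- exfalso; have := lex_le0 hl; rewrite b0 leqn0 => /eqP e.
  apply: a0; exact: val_inj.
- exact: lex_cons.
Qed.

Definition A d (w : word d.+2) (k : bnd d.+2) : bnd d.+2 :=
  if pre w k then wcat w (Acore (shift (size w) k)) else k.
Definition A' d (w : word d.+2) (k : bnd d.+2) : bnd d.+2 :=
  if pre w k then wcat w (Acore' (shift (size w) k)) else k.

Lemma AK d (w : word d.+2) : cancel (A w) (A' w).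
Proof.
move=> k; rewrite /A; case: ifP => hp.
  by rewrite /A' pre_wcat shift_wcat AcoreK wcat_shift.
by rewrite /A' hp.
Qed.

Lemma A'K d (w : word d.+2) : cancel (A' w) (A w).
Proof.
move=> k; rewrite /A'; case: ifP => hp.
  by rewrite /A pre_wcat shift_wcat Acore'K wcat_shift.
by rewrite /A hp.
Qed.

Lemma A_lt d (w : word d.+2) k m : m < size w -> A w k m = k m.
Proof.
move=> hm; rewrite /A; case: ifP => // hp.
rewrite -{2}(wcat_shift hp); exact: wcat_lt.
Qed.

Lemma A'_lt d (w : word d.+2) k m : m < size w -> A' w k m = k m.
Proof.
move=> hm; rewrite /A'; case: ifP => // hp.
rewrite -{2}(wcat_shift hp); exact: wcat_lt.
Qed.

Lemma A_lex d (w : word d.+2) k k' : lex_lt k k' -> lex_lt (A w k) (A w k').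
Proof.
move=> hl; case: (hl) => n [h1 h2].
case: (ltnP n (size w)) => hn.
  exists n; split; last by rewrite !A_lt.
  move=> m hm; rewrite !A_lt ?h1 //; exact: ltn_trans hm hn.
have ha : forall m, m < size w -> k m = k' m.
  move=> m hm; apply: h1; exact: leq_trans hm hn.
rewrite /A (pre_agree ha); case: ifP => // _.
apply: lex_wcat; apply: Acore_lex; exact: lex_shift.
Qed.

Definition Qcore d : seq (word d.+2 * word d.+2) :=
  [seq ([:: ord0; c], [:: c]) | c <- enum 'I_d.+2 & c != ord_max] ++
  [:: ([:: ord0; ord_max], [:: ord_max; ord0])] ++
  [seq ([:: c], [:: ord_max; c]) | c <- enum 'I_d.+2 & c != ord0].

Lemma cnt1' (T : finType) (a : T) (q r : pred T) :
  (forall c, r c = (a == c) && q c) -> count r (enum T) = q a.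
Proof. move=> h; rewrite (eq_count h); exact: cnt1. Qed.

Lemma cntF (T : finType) (a : T) (q r p : pred T) :
  (forall c, r c && p c = (a == c) && q c) -> count r [seq c <- enum T | p c] = q a.
Proof. move=> h; rewrite count_filter; exact: cnt1'. Qed.

Lemma Qcore_count1 d (t : bnd d.+2) :
  count (fun s => pre s t) (unzip1 (Qcore d)) = 1.
Proof.
rewrite /Qcore /unzip1 /unzip2 !map_cat !count_cat -!map_comp !count_map.
rewrite (@cntF _ (t 1) (fun c => (t 0 == ord0) && (c != ord_max))); last first.
  by move=> c /=; rewrite /shift /= andbT; case: (t 0 == ord0); case: (t 1 == c).
rewrite (@cntF _ (t 0) (fun c => c != ord0)); last first.
  by move=> c /=; rewrite andbT.
rewrite /= /shift /= andbT.
by case: (t 0 == ord0); case: (t 1 == ord_max).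
Qed.

Lemma Qcore_count2 d (t : bnd d.+2) :
  count (fun s => pre s t) (unzip2 (Qcore d)) = 1.
Proof.
rewrite /Qcore /unzip1 /unzip2 !map_cat !count_cat -!map_comp !count_map.
rewrite (@cntF _ (t 0) (fun c => c != ord_max)); last first.
  by move=> c /=; rewrite andbT.
rewrite (@cntF _ (t 1) (fun c => (t 0 == ord_max) && (c != ord0))); last first.
  by move=> c /=; rewrite /shift /= andbT; case: (t 0 == ord_max); case: (t 1 == c).
rewrite /= /shift /= andbT.
by case: (t 0 == ord_max); case: (t 1 == ord0).
Qed.

Lemma Qcore_act d p k : p \in Qcore d -> Acore (wcat p.1 k) = wcat p.2 k.
Proof.
rewrite /Qcore !mem_cat => /or3P [] /=.
- case/mapP => c; rewrite mem_filter => /andP [hc _] -> /=.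
  rewrite !wcat_cons !wcat_nil /Acore /ccons /=.
  by have -> : (c == ord_max) = false by apply/negbTE.
- rewrite inE => /eqP -> /=.
  by rewrite !wcat_cons !wcat_nil /Acore /ccons /= eqxx.
- case/mapP => c; rewrite mem_filter => /andP [hc _] -> /=.
  rewrite !wcat_cons !wcat_nil /Acore /ccons /=.
  by have -> : (c == ord0) = false by apply/negbTE.
Qed.

Lemma count_pre_map_cat d (w : word d) (S : seq (word d)) k :
  count (fun v => pre v k) [seq w ++ s | s <- S] =
  if pre w k then count (fun s => pre s (shift (size w) k)) S else 0.
Proof.
rewrite count_map; case: ifP => hp.
  by apply: eq_count => s /=; rewrite pre_cat hp.
rewrite (eq_count (a2 := pred0)) ?count_pred0 // => s /=; by rewrite pre_cat hp.
Qed.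

Definition Apairs d (w : word d.+2) : seq (word d.+2 * word d.+2) :=
  [seq (v, v) | v <- compl w] ++ [seq (w ++ p.1, w ++ p.2) | p <- Qcore d].

Lemma Apairs_count1 d (w : word d.+2) k :
  count (fun v => pre v k) (unzip1 (Apairs w)) = 1.
Proof.
rewrite /Apairs /unzip1 map_cat count_cat -!map_comp.
have -> : [seq (fst \o (fun p : word d.+2 * word d.+2 => (w ++ p.1, w ++ p.2))) i | i <- Qcore d]
   = [seq w ++ s | s <- unzip1 (Qcore d)] by rewrite /unzip1 -map_comp.
rewrite count_pre_map_cat Qcore_count1 /= map_id count_compl.
by case: (pre w k).
Qed.

Lemma Apairs_count2 d (w : word d.+2) k :
  count (fun v => pre v k) (unzip2 (Apairs w)) = 1.
Proof.
rewrite /Apairs /unzip2 map_cat count_cat -!map_comp.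
have -> : [seq (snd \o (fun p : word d.+2 * word d.+2 => (w ++ p.1, w ++ p.2))) i | i <- Qcore d]
   = [seq w ++ s | s <- unzip2 (Qcore d)] by rewrite /unzip2 -map_comp.
rewrite count_pre_map_cat Qcore_count2 /= map_id count_compl.
by case: (pre w k).
Qed.

Lemma Apairs_act d (w : word d.+2) p k :
  p \in Apairs w -> A w (wcat p.1 k) = wcat p.2 k.
Proof.
rewrite /Apairs mem_cat => /orP [].
- case/mapP => v hv -> /=; rewrite /A.
  by have -> : pre w (wcat v k) = false by apply/negbTE; apply: (mem_compl_pre hv); exact: pre_wcat.
- case/mapP => q hq -> /=; rewrite /A !wcat_cat pre_wcat shift_wcat.
  by rewrite (Qcore_act k hq).
Qed.

Lemma A_in_F d (w : word d.+2) : in_F (A w).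
Proof.
split; last by move=> k k'; exact: A_lex.
exists (size (Apairs w)), (fun i => nth [::] (unzip1 (Apairs w)) i),
  (fun i => nth [::] (unzip2 (Apairs w)) i), id.
split.
- apply: (cp_of_count (L := unzip1 (Apairs w))); first by rewrite size_map.
    by [].
  exact: Apairs_count1.
- apply: (cp_of_count (L := unzip2 (Apairs w))); first by rewrite size_map.
    by [].
  exact: Apairs_count2.
- by exists id.
- move=> i k.
  rewrite /unzip1 /unzip2 (nth_map ([::], [::])) // (nth_map ([::], [::])) //.
  apply: Apairs_act; exact: mem_nth.
Qed.

Lemma ta_size d (g : tmap d) w : tree_aut g -> size (g w) = size w.
Proof.
case=> _ [h0 hr]; elim/last_ind: w => [|w i IH]; first by rewrite h0.
by case: (hr w i) => j ->; rewrite !size_rcons IH.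
Qed.

Lemma ta_mkseq d (g : tmap d) k n : tree_aut g -> g (mkseq k n) = mkseq (bact g k) n.
Proof.
move=> ht; have [_ [h0 hr]] := ht.
elim: n => [|n IH]; first by rewrite /= h0.
rewrite !mkseqS; case: (hr (mkseq k n) (k n)) => j e.
rewrite e IH; congr rcons.
rewrite /bact mkseqS e IH nth_rcons size_mkseq ltnn eqxx //.
Qed.

Lemma bact_inj d (g : tmap d) : tree_aut g -> injective (bact g).
Proof.
move=> ht k k' e; have [[g' gK _] _] := ht.
apply: functional_extensionality => n.
have : g (mkseq k n.+1) = g (mkseq k' n.+1) by rewrite !ta_mkseq // e.
move/(can_inj gK) => e2.
have := congr1 (nth (k n) ^~ n) e2.
by rewrite !nth_mkseq.
Qed.

Lemma bact_local d (g : tmap d) k k' n :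
  (forall m, m <= n -> k m = k' m) -> bact g k n = bact g k' n.
Proof.
move=> h; rewrite /bact (h n (leqnn n)).
have -> : mkseq k n.+1 = mkseq k' n.+1.
  rewrite /mkseq; apply/eq_in_map => m; rewrite mem_iota /= => hm; apply: h; by rewrite -ltnS.
done.
Qed.

Lemma wcat_local d (Q : word d) s s' N :
  (forall m, m <= N -> s m = s' m) -> wcat Q s N = wcat Q s' N.
Proof.
move=> h; rewrite /wcat; case: ifP => hN.
  by rewrite (set_nth_default (s' N)).
apply: h; exact: leq_subr.
Qed.

Lemma pre_mkseq d (k0 k : bnd d) L :
  pre (mkseq k0 L) k <-> (forall m, m < L -> k m = k0 m).
Proof.
rewrite pre_in_cone /in_cone size_mkseq; split => h m hm; move: (h m hm);
  by rewrite nth_mkseq.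
Qed.

Lemma pre_nth d (w : word d) k m : pre w k -> m < size w -> k m = nth (k m) w m.
Proof. move/pre_in_cone => h; exact: h. Qed.

Lemma x_cone d (G : tmap d -> Prop) x :
  self_similar G -> in_V G x -> x <> id ->
  exists u : word d, (forall k, pre u k -> ~~ pre u (x k)) /\
    (forall k k', pre u k -> pre u k' -> x k = x k' -> k = k').
Proof.
move=> [[hGa _] _] [n [wp [wm [j [gs [cpp cpm bj hG heq]]]]]] hx.
have [k0 hk0] : exists k0, x k0 <> k0.
  apply: NNPP => hn; apply: hx; apply: functional_extensionality => k.
  by apply: NNPP => hk; apply: hn; exists k.
have [N hN] : exists N, x k0 N <> k0 N.
  apply: NNPP => hn; apply: hk0; apply: functional_extensionality => m.
  by apply: NNPP => hk; apply: hn; exists m.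
have [i0 [hi0 _]] := cpp k0.
set P := wp i0 in hi0; move/pre_in_cone: hi0 => hP0.
have hta := hGa _ (hG i0).
exists (mkseq k0 (size P + N.+1)).
have preP : forall k, pre (mkseq k0 (size P + N.+1)) k -> pre P k.
  move=> k /pre_mkseq hk; rewrite (pre_agree (k' := k0)) // => m hm.
  apply: hk; exact: ltn_addr.
have xk : forall k, pre P k -> x k = wcat (wm (j i0)) (bact (gs i0) (shift (size P) k)).
  by move=> k hk; rewrite -heq wcat_shift.
split.
- move=> k hk; apply/negP => /pre_mkseq hxk.
  have hPk := preP _ hk.
  have hk2 := proj1 (pre_mkseq _ _ _) hk.
  have hNN : N < size P + N.+1 by rewrite addnS ltnS leq_addl.
  have hloc : wcat (wm (j i0)) (bact (gs i0) (shift (size P) k)) N =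
               wcat (wm (j i0)) (bact (gs i0) (shift (size P) k0)) N.
    apply: wcat_local => m hm; apply: bact_local => m' hm'; rewrite /shift.
  apply: hk2.
  by rewrite ltn_add2l ltnS (leq_trans hm').
  have := hxk N hNN; rewrite (xk _ hPk) hloc -(xk _ hP0).
  exact: hN.
- move=> k k' hk hk' e.
  move: e; rewrite (xk _ (preP _ hk)) (xk _ (preP _ hk')) => e.
  have e2 := congr1 (shift (size (wm (j i0)))) e.
  rewrite !shift_wcat in e2.
  have e3 := bact_inj hta e2.
  by rewrite -(wcat_shift (preP _ hk)) -(wcat_shift (preP _ hk')) e3.
Qed.

Definition Cm d (w : word d.+2) : bnd d.+2 -> bnd d.+2 :=
  A' w \o A' (w ++ [:: ord0]) \o A w \o A (w ++ [:: ord0]).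
Definition Ci d (w : word d.+2) : bnd d.+2 -> bnd d.+2 :=
  A' (w ++ [:: ord0]) \o A' w \o A (w ++ [:: ord0]) \o A w.

Lemma CmK d (w : word d.+2) : cancel (Cm w) (Ci w).
Proof. by move=> k; rewrite /Cm /Ci /= !(A'K, AK). Qed.

Lemma CiK d (w : word d.+2) : cancel (Ci w) (Cm w).
Proof. by move=> k; rewrite /Cm /Ci /= !(A'K, AK). Qed.

Lemma Cm_FF d (w : word d.+2) : in_FF (Cm w).
Proof.
have hc : F_commutator (Cm w).
  exists (A w), (A (w ++ [:: ord0])), (A' w), (A' (w ++ [:: ord0])).
  split; try exact: A_in_F; try (split; [exact: AK | exact: A'K]).
  done.
exact: (FF_mul hc (@FF_id _)).
Qed.

Lemma Cm_lt d (w : word d.+2) k m : m < size w -> Cm w k m = k m /\ Ci w k m = k m.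
Proof.
move=> hm; have hm' : m < size (w ++ [:: ord0]) by rewrite size_cat ltn_addr.
by rewrite /Cm /Ci /= !A'_lt // !A_lt.
Qed.

Lemma Cm_pre d (w : word d.+2) k : pre w k -> pre w (Cm w k) /\ pre w (Ci w k).
Proof.
move=> hk; split.
  rewrite -(@pre_agree _ w k (Cm w k)) // => m hm; by case: (Cm_lt k hm).
rewrite -(@pre_agree _ w k (Ci w k)) // => m hm; by case: (Cm_lt k hm).
Qed.

Lemma A_out d (w : word d.+2) k : ~~ pre w k -> A w k = k /\ A' w k = k.
Proof. by move/negbTE => h; rewrite /A /A' h. Qed.

Lemma Cm_out d (w : word d.+2) k : ~~ pre w k -> Cm w k = k /\ Ci w k = k.
Proof.
move=> h; have h' : ~~ pre (w ++ [:: ord0]) k by rewrite pre_cat negb_and h.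
have [e1 e2] := A_out h; have [e3 e4] := A_out h'.
by rewrite /Cm /Ci /= !(e1, e2, e3, e4).
Qed.

Lemma wcat_size d (w : word d) t i : wcat w t (size w + i) = t i.
Proof. by rewrite -[wcat w t]/(fun n => wcat w t n) -{2}(shift_wcat w t). Qed.

Lemma Cm_nontriv d (w : word d.+2) : exists p, pre w p /\ Cm w p <> p.
Proof.
pose z : bnd d.+2 := fun _ => ord0.
pose p := wcat w (ccons ord0 (ccons ord_max z)).
have ep : p = wcat (w ++ [:: ord0]) (ccons ord_max z) by rewrite wcat_cat wcat_cons wcat_nil.
exists p; split; first exact: pre_wcat.
move=> e.
have e1 : A w (A (w ++ [:: ord0]) p) = A (w ++ [:: ord0]) (A w p).
  move: e; rewrite /Cm /= => e.
  have := congr1 (A w) e; rewrite A'K => e'.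
  by rewrite -e' A'K.
have hb : A (w ++ [:: ord0]) p = wcat w (ccons ord0 (ccons ord_max (ccons ord_max z))).
  rewrite ep /A pre_wcat shift_wcat wcat_cat wcat_cons wcat_nil /Acore /ccons /=.
  done.
have ha : A w p = wcat w (Acore (ccons ord0 (ccons ord_max z))).
  by rewrite /A pre_wcat shift_wcat.
have hba : ~~ pre (w ++ [:: ord0]) (A w p).
  rewrite pre_cat ha shift_wcat /= /Acore /ccons /= eqxx /=.
  by rewrite andbF.
have [hba' _] := A_out hba.
move: e1; rewrite hba' hb ha /A pre_wcat shift_wcat => e1.
have := congr1 (fun f => f (size w + 2)) e1; rewrite /= !wcat_size.
by rewrite /Acore /ccons /= !eqxx.
Qed.

Definition wn d (u : word d.+2) n : word d.+2 := u ++ nseq n ord0 ++ [:: ord_max].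

Lemma wn_nth0 d (u : word d.+2) n i x : i < n -> nth x (wn u n) (size u + i) = ord0.
Proof.
move=> hi; rewrite /wn nth_cat ltnNge leq_addr /= addKn nth_cat size_nseq hi.
by rewrite nth_nseq hi.
Qed.

Lemma wn_nthN d (u : word d.+2) n x : nth x (wn u n) (size u + n) = ord_max.
Proof.
by rewrite /wn nth_cat ltnNge leq_addr /= addKn nth_cat size_nseq ltnn subnn.
Qed.

Lemma size_wn d (u : word d.+2) n : size (wn u n) = size u + n.+1.
Proof. by rewrite /wn !size_cat size_nseq /= addn1. Qed.

Lemma wn_lt d (u : word d.+2) n m q : n < m -> pre (wn u n) q -> pre (wn u m) q -> False.
Proof.
move=> hnm h1 h2.
have s1 : size u + n < size (wn u n) by rewrite size_wn ltn_add2l.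
have s2 : size u + n < size (wn u m) by rewrite size_wn ltn_add2l ltnS ltnW.
have := pre_nth h1 s1; rewrite wn_nthN => e1.
have := pre_nth h2 s2; rewrite wn_nth0 // e1 => e2.
by move: (top_ne0 d); rewrite e2 eqxx.
Qed.

Lemma wn_disj d (u : word d.+2) n m q : n != m -> pre (wn u n) q -> ~~ pre (wn u m) q.
Proof.
move=> hne h1; apply/negP => h2.
case: (ltngtP n m) hne => // hlt _; [exact: (wn_lt hlt h1 h2) | exact: (wn_lt hlt h2 h1)].
Qed.

Lemma wn_pre_u d (u : word d.+2) n q : pre (wn u n) q -> pre u q.
Proof. by rewrite /wn pre_cat => /andP []. Qed.

Lemma pigeon T (f : nat -> T) (l : list T) :
  (forall n, n <= List.length l -> List.In (f n) l) ->
  exists n m, n != m /\ f n = f m.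
Proof.
move=> h; set N := List.length l.
have H : forall i : 'I_N.+1, exists j : 'I_N, List.nth j l (f 0) = f i.
  move=> i; have hi : i <= N by rewrite -ltnS.
  case: (List.In_nth l (f i) (f 0) (h i hi)) => j [/ltP hj e].
  by exists (Ordinal hj).
pose g i := proj1_sig (constructive_indefinite_description _ (H i)).
have gP : forall i, List.nth (g i) l (f 0) = f i.
  move=> i; exact: (proj2_sig (constructive_indefinite_description _ (H i))).
apply: NNPP => hn.
have ginj : injective g.
  move=> i i' e; apply: val_inj; apply: NNPP => ne; apply: hn.
  exists (val i), (val i'); split; first by apply/eqP.
  by rewrite -gP e gP.
by move: (leq_card g ginj); rewrite !card_ord ltnn.
Qed.

Theorem mainTheorem9 (d : nat) (hd : 2 <= d) (G : tmap d -> Prop) :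
  self_similar G ->
  forall x : bnd d -> bnd d, in_V G x -> x <> id ->
  ~ (exists l : List.list (bnd d -> bnd d),
       forall h y : bnd d -> bnd d, in_FF h -> y \o h = h \o x -> List.In y l).
Proof.
case: d hd G => [|[|d]] // _ G hss x hV hx [l hl].
have [u [hu1 hu2]] := x_cone hss hV hx.
pose y n := Cm (wn u n) \o x \o Ci (wn u n).
have hy : forall n, List.In (y n) l.
  move=> n; apply: (hl (Cm (wn u n))); first exact: Cm_FF.
  apply: functional_extensionality => k; by rewrite /y /= CmK.
have [n [m [hnm eym]]] := pigeon (fun n _ => hy n).
have [p [hp hcp]] := Cm_nontriv (wn u n).
have key : forall q, pre (wn u n) q -> Ci (wn u n) q = q.
  move=> q hq.
  have hqu := wn_pre_u hq.
  have [_ hq1] := Cm_pre hq.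
  have hxo : ~~ pre (wn u n) (x (Ci (wn u n) q)).
    apply/negP => /wn_pre_u; apply/negP; apply: hu1; exact: wn_pre_u hq1.
  have e1 : y n q = x (Ci (wn u n) q) by rewrite /y /=; case: (Cm_out hxo).
  have hqm := wn_disj hnm hq.
  have hxm : ~~ pre (wn u m) (x q).
    apply/negP => /wn_pre_u; apply/negP; exact: hu1.
  have e2 : y m q = x q.
    rewrite /y /=; have [_ ->] := Cm_out hqm; by case: (Cm_out hxm).
  apply: hu2 => //; first exact: wn_pre_u hq1.
  by rewrite -e1 -e2 eym.
have [hcp1 _] := Cm_pre hp.
have := key _ hcp1; rewrite CmK => e.
by apply: hcp.
Qed.

Print Assumptions mainTheorem9.
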